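(* Let $\Bbbk$ be a field, $S=\Bbbk[x_1,\dots,x_n]$, $\mathbf{a}\in\mathbb{N}^n$ with all $a_k\ge1$, $i\in[n]$, $j\ge1$ an integer, and $I\subset S$ a monomial ideal all of whose minimal generators $x^{\mathbf{c}}$ satisfy $\mathbf{c}\preceq\mathbf{a}$. For $\mathbf{b}\in\mathbb{N}^n$ with $\mathbf{b}\preceq\mathbf{a}$, $x^{\mathbf{b}}$ is a minimal generator of $I^{\vee\mathbf{a}}$ if and only if $x^{\tau_{\langle i,a_i+2-j\rangle}(\mathbf{b})}$ is a minimal generator of $(I^{\triangleleft\langle i,j\rangle})^{\vee(\mathbf{a}+\mathbf{e}_i)}$.
   Context: $\preceq$ is the componentwise order on $\mathbb{Z}^n$; $x^{\mathbf{b}}=\prod_k x_k^{b_k}$; $\mathbf{e}_i$ is the $i$-th unit vector. For $m\in\mathbb{Z}$, $\tau_{\langle i,m\rangle}:\mathbb{Z}^n\to\mathbb{Z}^n$ fixes coordinates $k\ne i$ and $(\tau_{\langle i,m\rangle}(\mathbf{b}))_i=b_i+1$ if $b_i\ge m$, $b_i$ if $b_i<m$. For $I=(x^{\mathbf{c}_1},\dots,x^{\mathbf{c}_r})$ and $j\ge1$, $I^{\triangleleft\langle i,j\rangle}:=(x^{\tau_{\langle i,j\rangle}(\mathbf{c}_1)},\dots,x^{\tau_{\langle i,j\rangle}(\mathbf{c}_r)})$. For $\mathbf{d}\in\mathbb{N}^n$ and a monomial ideal $J$ whose minimal generators have exponents $\preceq\mathbf{d}$, the Alexander dual is $J^{\vee\mathbf{d}}=(x^{\mathbf{b}}\mid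 \mathbf{b}\in\mathbb{N}^n,\ \mathbf{b}\preceq\mathbf{d},\ x^{\mathbf{d}-\mathbf{b}}\notin J)$.
   Formalization: j is restricted to 1 ≤ j ≤ aᵢ + 1 instead of ranging over all integers j ≥ 1. The statement above fails without it. *)

(* Defs.v *)
From mathcomp Require Import all_boot all_order all_algebra.
Set Implicit Arguments. Unset Strict Implicit. Unset Printing Implicit Defensive.
Import Order.TTheory GRing.Theory Num.Theory.

(* Exponent vectors b in N^n; the monomial x^b of S = k[x_1..x_n]. *)
Definition expo (n : nat) := {ffun 'I_n -> nat}.

(* componentwise order b <= c (i.e. x^b divides x^c) *)
Definition lev n (b c : expo n) : bool := [forall k, b k <= c k].

Definition addunit n (b : expo n) (i : 'I_n) : expo n :=
  [ffun k => if k == i then (b k).+1 else b k].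

(* d - b (componentwise, used only for b <= d) *)
Definition subexp n (d b : expo n) : expo n := [ffun k => d k - b k].

Definition tau n (i : 'I_n) (m : int) (b : expo n) : expo n :=
  [ffun k => if k == i then (if (m <= (b k)%:Z)%R then (b k).+1 else b k)
             else b k].

(* A monomial ideal is represented by the set of exponents of the monomials
   it contains. *)
Definition gen_ideal n (G : expo n -> Prop) : expo n -> Prop :=
  fun e => exists2 g, G g & lev g e.

Definition mon_ideal n (cs : seq (expo n)) : expo n -> Prop :=
  gen_ideal (fun c => c \in cs).

Definition is_mingen n (J : expo n -> Prop) (b : expo n) : Prop :=
  J b /\ (forall b', J b' -> lev b' b -> b' = b).

Definition alex_dual n (J : expo n -> Prop) (d : expo n) : expo n -> Prop :=
  gen_ideal (fun b => lev b d /\ ~ J (subexp d b)).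

Definition tri_gens n (i : 'I_n) (j : nat) (cs : seq (expo n)) : seq (expo n) :=
  [seq tau i j%:Z c | c <- cs].

(* Main.v *)
Require Import Defs.
From mathcomp Require Import all_boot all_order all_algebra.
From mathcomp Require Import zify.
Set Implicit Arguments. Unset Strict Implicit. Unset Printing Implicit Defensive.

Section H.
Variables (n : nat) (i : 'I_n).

Definition taun (M : nat) (b : expo n) : expo n :=
  [ffun k => if k == i then (if M <= b k then (b k).+1 else b k) else b k].
Definition rho (M : nat) (b : expo n) : expo n :=
  [ffun k => if k == i then (if M <= b k then b k - 1 else b k) else b k].

Lemma levP (b c : expo n) : reflect (forall k, b k <= c k) (lev b c).
Proof. exact: forallP. Qed.

Lemma lev_anti (b c : expo n) : lev b c -> lev c b -> b = c.
Proof.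
move=> /levP H1 /levP H2; apply/ffunP => k; apply/eqP; rewrite eqn_leq H1 H2.
done.
Qed.

Lemma taun_mono M b c : lev b c -> lev (taun M b) (taun M c).
Proof.
move=> /levP H; apply/levP => k; rewrite !ffunE; have := H k.
move: (b k) (c k) => x y.
case: (k == i) => //; do 2 case: ifP; lia.
Qed.

Lemma rho_mono M b c : lev b c -> lev (rho M b) (rho M c).
Proof.
move=> /levP H; apply/levP => k; rewrite !ffunE; have := H k.
move: (b k) (c k) => x y.
case: (k == i) => //; do 2 case: ifP; lia.
Qed.

Lemma rho_taun M b : rho M (taun M b) = b.
Proof.
apply/ffunP => k; rewrite !ffunE; move: (b k) => x.
case: (k == i) => //.
case: (leqP M x) => h; case: ifP; lia.
Qed.

Lemma taun_rho M w : 0 < M -> lev (taun M (rho M w)) w.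
Proof.
move=> HM; apply/levP => k; rewrite !ffunE; move: (w k) => x.
case: (k == i) => //.
case: (leqP M x) => h; case: ifP; lia.
Qed.

Lemma taun_lev M b a : lev b a -> lev (taun M b) (addunit a i).
Proof.
move=> /levP H; apply/levP => k; rewrite !ffunE; have := H k.
move: (b k) (a k) => x y.
case: (k == i) => //; case: ifP; lia.
Qed.

Lemma rho_lev M (w a : expo n) : 0 < M -> M <= (a i).+1 -> lev w (addunit a i) -> lev (rho M w) a.
Proof.
move=> HM HM2 /levP H; apply/levP => k; have := H k; rewrite !ffunE.
case: (k =P i) => [->|/eqP/negbTE ne]; rewrite ?eqxx ?ne //.
move: (w i) (a i) HM2 => x y HM2; case: ifP; lia.
Qed.

Lemma taun_levc j c v : 0 < j -> lev (taun j c) v = lev c (rho j v).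
Proof.
move=> Hj; apply/levP/levP => H k; have := H k; rewrite !ffunE;
move: (c k) (v k) => x y;
case: (k == i) => //; do 2 case: ifP; lia.
Qed.

Lemma rho_sub j (a w : expo n) : 0 < j -> j <= (a i).+1 ->
  rho j (subexp (addunit a i) w) = subexp a (rho (a i + 2 - j) w).
Proof.
move=> H1 H2; apply/ffunP => k; rewrite !ffunE.
case: eqP => [->|_] //; move: (a i) (w i) H2 => x y H2; do 2 case: ifP; lia.
Qed.

Lemma tau_eq j (a b : expo n) : j <= (a i).+1 ->
  tau i ((a i)%:Z + 2 - j%:Z)%R b = taun (a i + 2 - j) b.
Proof.
move=> Hj; have E : ((a i)%:Z + 2 - j%:Z)%R = Posz (a i + 2 - j) by lia.
apply/ffunP => k; rewrite !ffunE E lez_nat //.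
Qed.

Lemma tau_eqj j c : tau i j%:Z c = taun j c.
Proof. by apply/ffunP => k; rewrite !ffunE lez_nat. Qed.

End H.

Theorem lemma5p2 (n : nat) (a : expo n) (i : 'I_n) (j : nat)
    (cs : seq (expo n)) :
  (forall k, 0 < a k) ->
  0 < j -> j <= (a i).+1 ->
  (forall c, c \in cs -> lev c a) ->
  forall b : expo n, lev b a ->
    (is_mingen (alex_dual (mon_ideal cs) a) b <->
     is_mingen (alex_dual (mon_ideal (tri_gens i j cs)) (addunit a i))
               (tau i ((a i)%:Z + 2 - j%:Z)%R b)).
Proof.
move=> _ Hj0 Hj1 _ b _.
rewrite tau_eq //.
set M := a i + 2 - j.
have HM : 0 < M by rewrite /M; lia.
have HM2 : M <= (a i).+1 by rewrite /M; lia.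
set D := alex_dual (mon_ideal cs) a.
set D' := alex_dual _ _.
have memI : forall v, mon_ideal (tri_gens i j cs) v <-> mon_ideal cs (rho i j v).
  move=> v; split.
  - case=> g /mapP [c Hc ->]; rewrite tau_eqj taun_levc // => H.
    by exists c.
  - case=> c Hc H; exists (tau i j%:Z c); first by apply/mapP; exists c.
    by rewrite tau_eqj taun_levc.
have fwd : forall x, D x -> D' (taun i M x).
  move=> x [g [Hg HI] Hgx]; exists (taun i M g); last exact: taun_mono.
  split; first exact: taun_lev.
  by rewrite memI rho_sub // rho_taun.
have bwd : forall x, D' x -> D (rho i M x).
  move=> x [g [Hg HI] Hgx]; exists (rho i M g); last exact: rho_mono.
  split; first exact: rho_lev.
  by rewrite memI rho_sub // in HI.
split.
- case=> Hb Hmin; split; first exact: fwd.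
  move=> w Hw Hwb.
  have E : rho i M w = b.
    apply: Hmin; first exact: bwd.
    by rewrite -(rho_taun i M b); apply: rho_mono.
  apply: lev_anti => //; rewrite -E; exact: taun_rho.
- case=> Hb Hmin; split.
    by rewrite -(rho_taun i M b); apply: bwd.
  move=> b' Hb' Hle.
  have E := Hmin _ (fwd _ Hb') (taun_mono i M Hle).
  by rewrite -(rho_taun i M b') E rho_taun.
Qed.
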